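(* There is no finite T2R semigroup.
   Context: A semigroup $S$ is a $\Delta$-semigroup if the lattice of all congruences of $S$ is a chain with respect to inclusion. A semigroup $N$ with zero $0$ is nil if every element has some power equal to $0$; non-trivial means having more than one element. A T2R semigroup is a $\Delta$-semigroup $S$ which is the disjoint union of a non-trivial nil ideal $S_0$ (with zero $0$, which is then the zero of $S$) and a subsemigroup $S_1=\{u,v\}$, $u\neq v$, which is a right zero semigroup ($xy=y$ for $x,y\in S_1$). *)

(* Defs.v *)
From mathcomp Require Import all_boot.
Set Implicit Arguments. Unset Strict Implicit. Unset Printing Implicit Defensive.

Section Semigroups.
Variables (S : Type) (op : S -> S -> S).

Definition is_congruence (R : S -> S -> Prop) : Prop :=
  (forall a, R a a) /\ (forall a b, R a b -> R b a) /\
  (forall a b c, R a b -> R b c -> R a c) /\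
  (forall a b c, R a b -> R (op a c) (op b c) /\ R (op c a) (op c b)).

Definition delta_semigroup : Prop :=
  forall R1 R2 : S -> S -> Prop, is_congruence R1 -> is_congruence R2 ->
    (forall a b, R1 a b -> R2 a b) \/ (forall a b, R2 a b -> R1 a b).

(* spow x n = x^(n+1) *)
Definition spow (x : S) (n : nat) : S := iter n (op x) x.

Definition T2R : Prop :=
  delta_semigroup /\
  exists (S0 : S -> Prop) (z u v : S),
    u <> v /\ ~ S0 u /\ ~ S0 v /\ (forall x, S0 x \/ x = u \/ x = v) /\
    (forall x y, S0 x -> S0 (op x y) /\ S0 (op y x)) /\
    S0 z /\ (forall x, S0 x -> op z x = z /\ op x z = z) /\
    (forall x, S0 x -> exists n, spow x n = z) /\
    (exists x, S0 x /\ x <> z) /\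
    op u u = u /\ op u v = v /\ op v u = u /\ op v v = v.

End Semigroups.

(* Main.v *)
Require Import Defs.
From mathcomp Require Import all_boot.
From mathcomp Require Import zify.
From Stdlib Require Import Classical.
Set Implicit Arguments. Unset Strict Implicit. Unset Printing Implicit Defensive.

Inductive eclos (T : Type) (R : T -> T -> Prop) : T -> T -> Prop :=
| ecB x y : R x y -> eclos R x y
| ecR x : eclos R x x
| ecS x y : eclos R x y -> eclos R y x
| ecT x y w : eclos R x y -> eclos R y w -> eclos R x w.

Definition equivR (T : Type) (Q : T -> T -> Prop) :=
  (forall x, Q x x) /\ (forall x y, Q x y -> Q y x) /\
  (forall x y w, Q x y -> Q y w -> Q x w).

Lemma eclos_min (T : Type) (R Q : T -> T -> Prop) : equivR Q ->
  (forall x y, R x y -> Q x y) -> forall x y, eclos R x y -> Q x y.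
Proof.
move=> [hr [hs ht]] hRQ x y; elim=> //; eauto.
Qed.

Lemma eclos_cong (T : Type) (op : T -> T -> T) (R : T -> T -> Prop) :
  (forall x y c, R x y -> eclos R (op c x) (op c y) /\ eclos R (op x c) (op y c)) ->
  is_congruence op (eclos R).
Proof.
move=> hc; split; [exact: ecR|split; [exact: ecS|split; [exact: ecT|]]].
move=> a b c; elim=> {a b}.
- move=> x y /hc h; have [h1 h2] := h c; split=> //.
- by move=> x; split; apply: ecR.
- by move=> x y _ [h1 h2]; split; apply: ecS.
- by move=> x y w _ [h1 h2] _ [h3 h4]; split; apply: ecT; eauto.
Qed.

Lemma exmax (T : finType) (P : T -> Prop) (f : T -> nat) N :
  (forall x, f x <= N) -> (exists x, P x) ->
  exists x, P x /\ forall y, P y -> f y <= f x.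
Proof.
move=> hb [x Px].
suff: forall k x, P x -> N - f x <= k -> exists x, P x /\ forall y, P y -> f y <= f x.
  by move=> /(_ (N - f x) x Px (leqnn _)).
elim=> [|k IH] x0 P0 hk.
  exists x0; split=> // y _; have := hb y; have := hb x0; lia.
destruct (classic (exists y, P y /\ f x0 < f y)) as [[y [Py lt]]|no].
  apply: (IH y Py); have := hb y; lia.
exists x0; split=> // y Py; case: (leqP (f y) (f x0)) => // lt.
by exfalso; apply: no; exists y.
Qed.

Section Main.
Variables (S : finType) (op : S -> S -> S).
Hypothesis opA : associative op.
Variables (S0 : S -> Prop) (z u v : S).
Hypotheses (huv : u <> v) (hu : ~ S0 u) (hv : ~ S0 v)
  (hcov : forall x, S0 x \/ x = u \/ x = v)
  (hid : forall x y, S0 x -> S0 (op x y) /\ S0 (op y x))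
  (hz : S0 z) (hz0 : forall x, S0 x -> op z x = z /\ op x z = z)
  (hnil : forall x, S0 x -> exists n, spow op x n = z)
  (huu : op u u = u) (huv' : op u v = v) (hvu : op v u = u) (hvv : op v v = v).
Hypothesis hdelta : delta_semigroup op.

Lemma S0l x y : S0 y -> S0 (op x y). Proof. by move=> h; case: (hid x h). Qed.
Lemma S0r x y : S0 x -> S0 (op x y). Proof. by move=> h; case: (hid y h). Qed.

Lemma idem_z w : S0 w -> op w w = w -> w = z.
Proof.
move=> hw ww; have [n hn] := hnil hw.
suff: forall n, spow op w n = w by move=> h; rewrite -hn h.
by elim=> //= k IH; rewrite /spow /= -/(spow op w k) IH.
Qed.

Lemma zero_l s : op s z = z.
Proof.
apply: idem_z; first exact: S0l.
by rewrite -opA (proj1 (hz0 (S0l s hz))).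
Qed.

Lemma zero_r s : op z s = z.
Proof.
apply: idem_z; first exact: S0r.
by rewrite opA (proj2 (hz0 (S0r s hz))).
Qed.

Definition lm (p : option S) x := if p is Some s then op s x else x.
Definition rm x (q : option S) := if q is Some s then op x s else x.
Definition mul1 (p q : option S) := match p, q with
  | None, _ => q | Some a, None => Some a | Some a, Some b => Some (op a b) end.
Definition in0 (p : option S) := if p is Some s then S0 s else False.

Lemma lmA p p' x : lm (mul1 p p') x = lm p (lm p' x).
Proof. by case: p; case: p' => //= *; rewrite opA. Qed.
Lemma rmA x q q' : rm x (mul1 q q') = rm (rm x q) q'.
Proof. by case: q; case: q' => //= *; rewrite opA. Qed.
Lemma lrm p x q : lm p (rm x q) = rm (lm p x) q.
Proof. by case: p; case: q => //= *; rewrite opA. Qed.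
Lemma in0_mul p q : in0 p \/ in0 q -> in0 (mul1 p q).
Proof. by case: p; case: q => //= *; intuition; [exact: S0r | exact: S0l]. Qed.
Lemma lm_z p : lm p z = z. Proof. by case: p => //= s; rewrite zero_l. Qed.
Lemma rm_z q : rm z q = z. Proof. by case: q => //= s; rewrite zero_r. Qed.

Definition Jrel y x := exists p q, y = lm p (rm x q).
Definition Jb y x : bool := [exists p : option S, exists q : option S, y == lm p (rm x q)].
Lemma JbP y x : reflect (Jrel y x) (Jb y x).
Proof.
apply: (iffP existsP) => [[p /existsP [q /eqP E]]|[p [q E]]].
  by exists p, q.
by exists p; apply/existsP; exists q; apply/eqP.
Qed.
Lemma Jrefl x : Jrel x x. Proof. by exists None, None. Qed.
Lemma Jcomp y x w p q p' q' : y = lm p (rm x q) -> x = lm p' (rm w q') ->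
  y = lm (mul1 p p') (rm w (mul1 q' q)).
Proof. by move=> -> ->; rewrite lmA rmA [lm p' (rm (rm w q') q)]lrm. Qed.
Lemma Jtrans y x w : Jrel y x -> Jrel x w -> Jrel y w.
Proof. move=> [p [q h1]] [p' [q' h2]]; exists (mul1 p p'), (mul1 q' q); exact: Jcomp h1 h2. Qed.
Lemma J_z y : Jrel y z -> y = z.
Proof. by move=> [p [q ->]]; rewrite rm_z lm_z. Qed.

Lemma spow_comm s n : op (spow op s n) s = op s (spow op s n).
Proof.
elim: n => //= n IH; rewrite /spow /= -/(spow op s n).
by rewrite -opA IH.
Qed.

Lemma iter_rm k q s y : iter k (fun x => rm x q) (op s y) = op s (iter k (fun x => rm x q) y).
Proof. elim: k => //= k ->; by case: q => //= t; rewrite opA. Qed.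
Lemma iter_lm k p s y : iter k (lm p) (op y s) = op (iter k (lm p) y) s.
Proof. elim: k => //= k ->; by case: p => //= t; rewrite opA. Qed.

Lemma nil_left a s q : S0 s -> a = op s (rm a q) -> a = z.
Proof.
move=> hs ha.
have key : forall n, a = op (spow op s n) (iter n.+1 (fun x => rm x q) a).
  elim=> [|n IH] //.
  rewrite {1}IH.
  have -> : iter n.+1 (fun x => rm x q) a = iter n.+1 (fun x => rm x q) (op s (rm a q)) by rewrite -ha.
  rewrite iter_rm opA spow_comm -iterSr.
  done.
have [n hn] := hnil hs.
by rewrite (key n) hn zero_r.
Qed.

Lemma nil_right a s p : S0 s -> a = op (lm p a) s -> a = z.
Proof.
move=> hs ha.
have key : forall n, a = op (iter n.+1 (lm p) a) (spow op s n).
  elim=> [|n IH] //.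
  rewrite {1}IH.
  have -> : iter n.+1 (lm p) a = iter n.+1 (lm p) (op (lm p a) s) by rewrite -ha.
  by rewrite iter_lm -opA -iterSr.
have [n hn] := hnil hs.
by rewrite (key n) hn zero_l.
Qed.

Lemma nil1 a p q : in0 p \/ in0 q -> a = lm p (rm a q) -> a = z.
Proof.
case=> h ha.
  by case: p h ha => //= s hs ha; apply: nil_left hs ha.
case: q h ha => //= t ht ha; apply: (nil_right (p := p)) ht _.
by rewrite {1}ha; exact: (lrm p a (Some t)).
Qed.

Definition J x : {set S} := [set y | Jb y x].

Section Top.
Variable a : S.
Hypotheses (ha0 : S0 a) (haz : a <> z)
  (hmax : forall x, S0 x /\ x <> z -> #|J x| <= #|J a|).

Definition I x := S0 x /\ ~ Jrel a x.

Lemma top x : S0 x -> Jrel a x -> Jrel x a.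
Proof.
move=> hx hax.
have xz : x <> z by move=> e; apply: haz; apply: J_z; rewrite -e.
have hc := hmax (conj hx xz).
have sub : J a \subset J x.
  by apply/subsetP => y; rewrite !inE => /JbP h; apply/JbP; exact: Jtrans h hax.
have e : J a = J x by apply/eqP; rewrite eqEcard sub hc.
have : x \in J x by rewrite inE; apply/JbP; exact: Jrefl.
by rewrite -e inE => /JbP.
Qed.

Lemma form x : S0 x -> Jrel a x ->
  exists p q, x = lm p (rm a q) /\ ~ in0 p /\ ~ in0 q.
Proof.
move=> hx hax; have [p [q hx']] := top hx hax.
have [p' [q' ha']] := hax.
exists p, q; split=> //.
have e := Jcomp ha' hx'.
split=> h; apply: haz; apply: nil1 e; [left|right]; apply: in0_mul; auto.
Qed.

Lemma notin0 p : ~ in0 p -> p = None \/ p = Some u \/ p = Some v.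
Proof. by case: p => [s /= h|]; auto; case: (hcov s) => [//|[->|->]]; auto. Qed.

Lemma I_ideal x c : I x -> I (op c x) /\ I (op x c).
Proof.
move=> [hx hn]; split; split; [exact: S0l|move=> h; apply: hn|exact: S0r|move=> h; apply: hn].
  apply: (Jtrans h); by exists (Some c), None.
apply: (Jtrans h); by exists None, (Some c).
Qed.

Lemma I_lm p x : I x -> I (lm p x).
Proof. by case: p => //= s h; case: (I_ideal s h). Qed.

Lemma aI : ~ I a. Proof. by move=> [_ h]; apply: h; apply: Jrefl. Qed.
Lemma zI : I z. Proof. by split=> // h; apply: haz; apply: J_z. Qed.

Lemma prodI c x : S0 c -> S0 x -> I (op c x) /\ I (op x c).
Proof.
move=> hc hx; split; split; [exact: S0l|move=> h|exact: S0r|move=> h].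
- have hax : Jrel a x by apply: (Jtrans h); exists (Some c), None.
  have [p' [q' e2]] := top hx hax.
  have [p [q e1]] := h.
  have e1' : a = lm p (rm (lm (Some c) (rm x None)) q) by [].
  apply: haz; apply: (nil1 (p := mul1 (mul1 p (Some c)) p') (q := mul1 q' (mul1 None q))).
    by left; apply: in0_mul; left; apply: in0_mul; right.
  exact: Jcomp (Jcomp e1' (erefl _)) e2.
- have hax : Jrel a x by apply: (Jtrans h); exists None, (Some c).
  have [p' [q' e2]] := top hx hax.
  have [p [q e1]] := h.
  have e1' : a = lm p (rm (lm None (rm x (Some c))) q) by [].
  apply: haz; apply: (nil1 (p := mul1 (mul1 p None) p') (q := mul1 q' (mul1 (Some c) q))).
    by right; apply: in0_mul; right; apply: in0_mul; left.
  exact: Jcomp (Jcomp e1' (erefl _)) e2.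
Qed.

Definition G1 x y := (I x /\ I y) \/ exists w, S0 w /\ x = op u w /\ y = op v w.
Definition G2 x y := (I x /\ I y) \/ exists w, S0 w /\ x = op w u /\ y = op w v.
Definition rho x y := x = y \/ (S0 x /\ S0 y).
Definition reesI x y := x = y \/ (I x /\ I y).
Definition sig (E : S -> S -> Prop) x y := E x y \/ ((x = u \/ x = v) /\ (y = u \/ y = v)).

Lemma rho_equiv : equivR rho.
Proof.
rewrite /rho; split; [by left|split; [move=> x y [->|[]]; auto|]].
move=> x y w [->|[h1 h2]] [<-|[h3 h4]]; auto.
Qed.

Lemma reesI_equiv : equivR reesI.
Proof.
rewrite /reesI; split; [by left|split; [move=> x y [->|[]]; auto|]].
move=> x y w [->|[h1 h2]] [<-|[h3 h4]]; auto.
Qed.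

Lemma rho_cong : is_congruence op rho.
Proof.
have [r [s t]] := rho_equiv; split=> //; split=> //; split=> //.
move=> x y c [->|[h1 h2]]; first by split; left.
by split; right; split; [exact: S0r|exact: S0r|exact: S0l|exact: S0l].
Qed.

Lemma G1_cong : is_congruence op (eclos G1).
Proof.
apply: eclos_cong => x y c [[hx hy]|[w [hw [-> ->]]]].
  have [h1 h2] := I_ideal c hx; have [h3 h4] := I_ideal c hy.
  by split; apply: ecB; left.
split.
  case: (hcov c) => [hc|[->|->]].
  - apply: ecB; left; rewrite !opA; split.
      by case: (prodI (S0r u hc) hw).
    by case: (prodI (S0r v hc) hw).
  - by rewrite !opA huu huv'; apply: ecB; right; exists w.
  - by rewrite !opA hvu hvv; apply: ecB; right; exists w.
by rewrite -!opA; apply: ecB; right; exists (op w c); split=> //; exact: S0r.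
Qed.

Lemma G2_cong : is_congruence op (eclos G2).
Proof.
apply: eclos_cong => x y c [[hx hy]|[w [hw [-> ->]]]].
  have [h1 h2] := I_ideal c hx; have [h3 h4] := I_ideal c hy.
  by split; apply: ecB; left.
split.
  by rewrite !opA; apply: ecB; right; exists (op c w); split=> //; exact: S0l.
case: (hcov c) => [hc|[->|->]].
- apply: ecB; left; split.
    by case: (prodI hc (S0r u hw)).
  by case: (prodI hc (S0r v hw)).
- by rewrite -!opA huu hvu; apply: ecR.
- by rewrite -!opA huv' hvv; apply: ecR.
Qed.

Lemma G1_rho x y : eclos G1 x y -> rho x y.
Proof.
apply: eclos_min; first exact: rho_equiv.
move=> {}x {}y [[[h1 _] [h2 _]]|[w [hw [-> ->]]]]; right; split=> //; exact: S0l.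
Qed.

Lemma G2_rho x y : eclos G2 x y -> rho x y.
Proof.
apply: eclos_min; first exact: rho_equiv.
move=> {}x {}y [[[h1 _] [h2 _]]|[w [hw [-> ->]]]]; right; split=> //; exact: S0r.
Qed.

Lemma sig_cong E : is_congruence op E -> (forall x y, E x y -> rho x y) ->
  (forall w, S0 w -> E (op u w) (op v w)) -> (forall w, S0 w -> E (op w u) (op w v)) ->
  is_congruence op (sig E).
Proof.
move=> [r [s [t c]]] hr h1 h2; rewrite /sig.
have uvS : forall x, (x = u \/ x = v) -> ~ S0 x by move=> x [->|->].
split; first by left.
split; first by move=> x y [h|[h h']]; [left; apply: s|right].
split.
  move=> x y w [hxy|[hx hy]] [hyw|[hy' hw]].
  - by left; apply: t hxy hyw.
  - by case: (hr _ _ hxy) => [->|[_ /(uvS _ hy')]]; [right|].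
  - by case: (hr _ _ hyw) => [<-|[/(uvS _ hy) ]]; [right|].
  - by right.
move=> x y w [hxy|[hx hy]]; first by have [e1 e2] := c _ _ w hxy; split; left.
case: (hcov w) => [hw|[->|->]].
- split; left.
  + case: hx => ->; case: hy => ->; auto.
  + case: hx => ->; case: hy => ->; auto.
- split; right; case: hx => ->; case: hy => ->;
    rewrite ?huu ?huv' ?hvu ?hvv; auto.
- split; right; case: hx => ->; case: hy => ->;
    rewrite ?huu ?huv' ?hvu ?hvv; auto.
Qed.

Lemma lemA : ~ eclos G1 a z.
Proof.
move=> h.
destruct (classic (op u a = a)) as [hua|hua].
  have : reesI a z.
    apply: (eclos_min reesI_equiv _ h) => x y [hxy|[w [hw [-> ->]]]]; first by right.
    destruct (classic (Jrel a w)) as [hj|hj].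
      have [p [q [e [hp _]]]] := form hw hj.
      have huw : op u w = w.
        rewrite e; case: (notin0 hp) => [->|[->|->]] /=.
        - by rewrite [op u (rm a q)](lrm (Some u)) /= hua.
        - by rewrite opA huu.
        - by rewrite opA huv'.
      by left; rewrite -[in RHS]huw opA hvu huw.
    right; have hI : I w by split.
    by split; case: (I_ideal u hI) => //; case: (I_ideal v hI).
  by case=> [//|[/aI]].
have : a = a <-> z = a.
  apply: (eclos_min (Q := fun x y => x = a <-> y = a) _ _ h).
    split; first by [].
    split; first by move=> x y [].
    by move=> x y w [h1 h2] [h3 h4]; split; auto.
  move=> x y [[hx hy]|[w [hw [-> ->]]]].
    by split=> e; exfalso; apply: aI; [rewrite -e|rewrite -e].
  split=> e; exfalso; apply: hua.
    by rewrite -{1}e opA huu.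
  by rewrite -{1}e opA huv'.
by case=> /(_ erefl) /esym.
Qed.

Lemma lemB : ~ eclos G2 a z.
Proof.
move=> h.
have hq : op a u = op z u \/ (I (op a u) /\ I (op z u)).
  apply: (eclos_min (Q := fun x y => op x u = op y u \/ (I (op x u) /\ I (op y u))) _ _ h).
    split; first by left.
    split; first by move=> x y [->|[]]; auto.
    by move=> x y w [->|[h1 h2]] [<-|[h3 h4]]; auto.
  move=> x y [[hx hy]|[w [hw [-> ->]]]].
    by right; split; [case: (I_ideal u hx)|case: (I_ideal u hy)].
  by left; rewrite -!opA huu hvu.
have hIau : I (op a u) by case: hq => [->|[]//]; rewrite zero_r; exact: zI.
have : reesI a z.
  apply: (eclos_min reesI_equiv _ h) => x y [hxy|[w [hw [-> ->]]]]; first by right.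
  have hwu : I (op w u).
    destruct (classic (Jrel a w)) as [hj|hj].
      have [p [q [e [_ hq']]]] := form hw hj.
      rewrite e -[op (lm p (rm a q)) u]/(rm (lm p (rm a q)) (Some u)) -lrm /=.
      apply: I_lm; case: (notin0 hq') => [->|[->|->]] //=.
      - by rewrite -opA huu.
      - by rewrite -opA hvu.
    by case: (I_ideal u (conj hw hj)).
  right; split=> //.
  by rewrite -huv' opA; case: (I_ideal v hwu).
by case=> [//|[/aI]].
Qed.

Lemma final : False.
Proof.
have E1 : forall w, S0 w -> eclos G1 (op u w) (op v w).
  by move=> w hw; apply: ecB; right; exists w.
have E2 : forall w, S0 w -> eclos G2 (op w u) (op w v).
  by move=> w hw; apply: ecB; right; exists w.
have key : forall E, is_congruence op E -> (forall x y, E x y -> rho x y) ->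
   (forall w, S0 w -> E (op u w) (op v w)) -> (forall w, S0 w -> E (op w u) (op w v)) -> E a z.
  move=> E hE hr h1 h2.
  have hs := sig_cong hE hr h1 h2.
  case: (hdelta rho_cong hs) => hsub.
    have : sig E a z by apply: hsub; right.
    by case=> [//|[[e|e] _]]; exfalso; [apply: hu|apply: hv]; rewrite -e.
  have : rho u v by apply: hsub; right; auto.
  by case=> [//|[]].
case: (hdelta G1_cong G2_cong) => hsub.
  apply: lemB; apply: key; [exact: G2_cong|exact: G2_rho| |exact: E2].
  by move=> w hw; apply: hsub; apply: E1.
apply: lemA; apply: key; [exact: G1_cong|exact: G1_rho|exact: E1|].
by move=> w hw; apply: hsub; apply: E2.
Qed.

End Top.

Lemma core (hnt : exists x, S0 x /\ x <> z) : False.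
Proof.
have [a [[ha0 haz] hmax]] := exmax (f := fun x => #|J x|) (fun x => max_card (J x)) hnt.
exact: (@final a ha0 haz hmax).
Qed.

End Main.


Theorem mainTheorem8 (S : finType) (op : S -> S -> S) :
  associative op -> ~ T2R op.
Proof.
move=> opA [hd [S0 [z [u [v [huv [hu [hv [hcov [hid [hz [hz0 [hnil [hnt [huu [huv' [hvu hvv]]]]]]]]]]]]]]]]].
exact: (core opA huv hu hv hcov hid hz hz0 hnil huu huv' hvu hvv hd hnt).
Qed.
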